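(* Let $(A,H,D,J)$ be a finite-dimensional real spectral triple, and with $D_0,D_1,D_R$ as in the context assume that $D_R$ commutes with every element of $A$. Then the 2nd order condition holds (i.e. every element of $\mathcal{C}\ell_D(A)$ commutes with every element of $\mathcal{C}\ell_D(A)^\circ$) if and only if $[D_0,D_1]=0$.
   Context: A finite-dimensional real spectral triple $(A,H,D,J)$ consists of a finite-dimensional complex Hilbert space $H$, a unital (real or complex) $*$-subalgebra $A\subseteq\mathrm{End}_{\mathbb{C}}(H)$, a selfadjoint operator $D$ on $H$, and an antilinear isometry $J$ with $J^2=\varepsilon1$, $JD=\varepsilon'DJ$ ($\varepsilon,\varepsilon'\in\{\pm1\}$; in the even case also $J\gamma=\varepsilon''\gamma J$ for a grading $\gamma$ commuting with $A$ and anticommuting with $D$), such that $[a,JbJ^{-1}]=0$ and $[[D,a],JbJ^{-1}]=0$ for all $a,b\in A$. Let $A_{\mathbb{C}}$ be the complex $*$-subalgebra generated by $A$, $A_{\mathbb{C}}\cong\bigoplus_{i=1}^N M_{n_i}(\mathbb{C})$, with $P_i$ the units of the summands; set $Q_j=JP_jJ^{-1}$, $D_{ij,kl}=P_iQ_jDP_kQ_l$, $D_0=\sum_{i\neq k}D_{ij,kj}$ (sum over $i,j,k$ with $i\ne k$), $D_1=\sum_{j\neq l}D_{ij,il}$ (sum over $i,j,l$ with $j\neq l$), $D_R=\sum_{i,j}D_{ij,ij}$. For $\xi\in\mathrm{End}_{\mathbb{C}}(H)$, $\xi^\circ=J\xi^*J^{-1}$, and $S^\circ=\{\xi^\circ:\xi\in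 S\}$. $\mathcal{C}\ell_D(A)$ is the complex $*$-subalgebra of $\mathrm{End}_{\mathbb{C}}(H)$ generated by $A$ and the operators $a[D,b]$, $a,b\in A$. *)

(* Defs.v *)
From mathcomp Require Import all_boot all_algebra.
From mathcomp Require Import reals complex.
Set Implicit Arguments. Unset Strict Implicit. Unset Printing Implicit Defensive.
Import GRing.Theory Num.Theory.
Local Open Scope ring_scope.

Section Defs.
Variables (R : realType) (n : nat).
Local Notation C := (R[i]).
Local Notation M := ('M[C]_n).

Definition conjm (x : M) : M := map_mx Num.conj x.
Definition adj (x : M) : M := (conjm x)^T.
Definition comm (x y : M) : M := x *m y - y *m x.

(* The antilinear isometry J of C^n is encoded by a unitary U with
   J v = U (conj v).  Then J x J^{-1} = U (conj x) U^*. *)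
Definition Jconj (U x : M) : M := U *m conjm x *m adj U.
Definition opp (U x : M) : M := Jconj U (adj x).

Definition cstar_subalg (S : M -> Prop) : Prop :=
  [/\ S 1%:M,
      (forall x y, S x -> S y -> S (x + y)),
      (forall (c : C) x, S x -> S (c *: x)),
      (forall x y, S x -> S y -> S (x *m y)) &
      (forall x, S x -> S (adj x))].

Definition real_star_subalg (S : M -> Prop) : Prop :=
  [/\ S 1%:M,
      (forall x y, S x -> S y -> S (x + y)),
      (forall (c : C) x, c \is Num.real -> S x -> S (c *: x)),
      (forall x y, S x -> S y -> S (x *m y)) &
      (forall x, S x -> S (adj x))].

Definition gen_cstar (G : M -> Prop) (x : M) : Prop :=
  forall S : M -> Prop, cstar_subalg S -> (forall g, G g -> S g) -> S x.

(* finite-dimensional real spectral triple (A, H = C^n, D, J = U o conj);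
   gam = Some (gamma, eps'') in the even case, None in the odd case *)
Definition real_spectral_triple (A : M -> Prop) (D U : M) (eps eps' : C)
    (gam : option (M * C)) : Prop :=
  real_star_subalg A /\
  adj D = D /\
  (U *m adj U = 1%:M /\ adj U *m U = 1%:M) /\
  ((eps = 1 \/ eps = -1) /\ (eps' = 1 \/ eps' = -1)) /\
  U *m conjm U = eps%:M /\
  U *m conjm D = eps' *: (D *m U) /\
  (forall a b, A a -> A b -> comm a (Jconj U b) = 0) /\
  (forall a b, A a -> A b -> comm (comm D a) (Jconj U b) = 0) /\
  (match gam with
   | None => True
   | Some (g, eps'') =>
       adj g = g /\ g *m g = 1%:M /\
       (forall a, A a -> comm g a = 0) /\
       g *m D = - (D *m g) /\
       (eps'' = 1 \/ eps'' = -1) /\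
       U *m conjm g = eps'' *: (g *m U)
   end).

Definition AC (A : M -> Prop) := gen_cstar A.

(* central projections of A_C, and minimal ones (= units of the simple
   summands of A_C = direct sum of full matrix algebras) *)
Definition central_proj (A : M -> Prop) (P : M) : Prop :=
  [/\ AC A P, P *m P = P, adj P = P, P != 0 &
      forall x, AC A x -> P *m x = x *m P].

Definition min_central_proj (A : M -> Prop) (P : M) : Prop :=
  central_proj A P /\
  forall Q, central_proj A Q -> Q *m P = Q -> Q = P.

Definition ClD (A : M -> Prop) (D : M) : M -> Prop :=
  gen_cstar (fun x => A x \/ exists a b, [/\ A a, A b & x = a *m comm D b]).

Definition second_order (A : M -> Prop) (D U : M) : Prop :=
  forall x y, ClD A D x -> ClD A D y -> x *m opp U y = opp U y *m x.

Section Blocks.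
Variables (N : nat) (P : 'I_N -> M) (U D : M).
Definition Qp (j : 'I_N) : M := Jconj U (P j).
Definition Dblk (i j k l : 'I_N) : M := P i *m Qp j *m D *m P k *m Qp l.
Definition D0 : M := \sum_(i < N) \sum_(j < N) \sum_(k < N | k != i) Dblk i j k j.
Definition D1 : M := \sum_(i < N) \sum_(j < N) \sum_(l < N | l != j) Dblk i j i l.
Definition DR : M := \sum_(i < N) \sum_(j < N) Dblk i j i j.
End Blocks.

End Defs.

(* Main.v *)
Require Import Defs.
From mathcomp Require Import all_boot all_algebra.
From mathcomp Require Import reals complex.
From Stdlib Require Import Classical.
Import GRing.Theory Num.Theory.
Local Open Scope ring_scope.

Unset Implicit Arguments.
Section G.
Variable Z : zmodType.
Lemma z2 (a c d e : Z) : a - c - (d - e) = a - d - (c - e).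
Proof. by rewrite !opprB !addrA [a - c + e - d]addrAC [a - d + e - c]addrAC [a - c - d]addrAC. Qed.
Lemma z3 (a b c : Z) : a - (a - b + c) = b - c.
Proof. by rewrite opprD opprB addrA addrCA subrr addr0. Qed.
Lemma z4 (a b c : Z) : a + b + c - a - b = c.
Proof. by rewrite -addrA -opprD [a + b + c]addrC addrK. Qed.
Lemma z6 (x y z w : Z) : (x + y + z) - (w + y + z) = x - w.
Proof. by rewrite [w + y + z]addrC [x + y + z]addrC opprD addrACA subrr add0r [x + y]addrC [w + y]addrC opprD addrACA subrr add0r. Qed.
End G.
Section RG.
Variable T : pzRingType.
Lemma comm_cr (D x y : T) : GRing.comm D y -> GRing.comm x y -> GRing.comm (D * x - x * D) y.
Proof.
move=> h1 h2; apply/commr_sym; apply: commrB; apply: commrM; by apply/commr_sym.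
Qed.
Lemma jacA (D x y : T) : x * y = y * x -> (D*x - x*D)*y = y*(D*x - x*D) ->
  (D*y - y*D)*x = x*(D*y - y*D).
Proof.
move=> h1 h2.
have e1 : D*y*x = D*x*y by rewrite -!mulrA h1.
have e2 : x*y*D = y*x*D by rewrite h1.
move: h2; rewrite !(mulrBl, mulrBr) !mulrA e1 e2 => /eqP.
rewrite subr_eq => /eqP ->.
by rewrite -!addrA addrC -!addrA [- (y * D * x) + _]addrC subrr addr0 addrC.
Qed.
Lemma keyid (D0 D1 a b : T) : GRing.comm D0 b -> GRing.comm D1 a -> GRing.comm a b ->
  (D0*a - a*D0)*(D1*b - b*D1) - (D1*b - b*D1)*(D0*a - a*D0) =
  let Z := D0*D1 - D1*D0 in (Z*a - a*Z)*b - b*(Z*a - a*Z).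
Proof.
move=> h0 h1 hab /=.
set X := D0*a - a*D0.
have hX : GRing.comm X b by apply: comm_cr.
have eZ : X*D1 - D1*X = (D0*D1 - D1*D0)*a - a*(D0*D1 - D1*D0).
  rewrite /X !(mulrBl, mulrBr) !mulrA.
  by rewrite -[D0*a*D1]mulrA -h1 mulrA h1 z2.
rewrite -eZ; clearbody X.
rewrite !(mulrBl, mulrBr) !mulrA.
by rewrite -[D1*b*X]mulrA -hX mulrA z2.
Qed.
Lemma cr3 (X Y Z a : T) : GRing.comm Y a -> GRing.comm Z a ->
  (X+Y+Z)*a - a*(X+Y+Z) = X*a - a*X.
Proof. by move=> hY hZ; rewrite !(mulrDl, mulrDr) hY hZ z6. Qed.
Lemma keyid2 (D0 D1 a b : T) : GRing.comm D0 b -> GRing.comm D1 a -> GRing.comm a b ->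
  (D0*a - a*D0)*(D1*b - b*D1) - (D1*b - b*D1)*(D0*a - a*D0) =
  ((D0*D1 - D1*D0)*a - a*(D0*D1 - D1*D0))*b - b*((D0*D1 - D1*D0)*a - a*(D0*D1 - D1*D0)).
Proof. exact: keyid. Qed.
End RG.

Unset Implicit Arguments.
Section S.
Variables (R : realType) (n : nat).
Local Notation C := (R[i]).
Local Notation M := ('M[C]_n).
Lemma conjmM (x y : M) : conjm (x * y) = conjm x * conjm y.
Proof. by rewrite /conjm -!mulmxE map_mxM. Qed.
Lemma conjmZ (c : C) (x : M) : conjm (c *: x) = c^* *: conjm x.
Proof. by rewrite /conjm map_mxZ. Qed.
Lemma conjmD (x y : M) : conjm (x + y) = conjm x + conjm y.
Proof. by rewrite /conjm map_mxD. Qed.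
Lemma conjmN (x : M) : conjm (- x) = - conjm x.
Proof. by rewrite /conjm map_mxN. Qed.
Lemma conjm1 : conjm (1 : M) = 1.
Proof. by rewrite /conjm map_mx1. Qed.
Lemma conjmK (x : M) : conjm (conjm x) = x.
Proof. by apply/matrixP => i j; rewrite /conjm !mxE conjCK. Qed.
Lemma hadjE (x : M) : adj x = (conjm x)^T. Proof. by []. Qed.
Lemma hadjM (x y : M) : adj (x * y) = adj y * adj x.
Proof. by rewrite /adj conjmM -!mulmxE trmx_mul. Qed.
Lemma hadjZ (c : C) (x : M) : adj (c *: x) = c^* *: adj x.
Proof. by rewrite /adj conjmZ linearZ. Qed.
Lemma hadjD (x y : M) : adj (x + y) = adj x + adj y.
Proof. by rewrite /adj conjmD linearD. Qed.
Lemma hadjN (x : M) : adj (- x) = - adj x.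
Proof. by rewrite /adj conjmN linearN. Qed.
Lemma hadjB (x y : M) : adj (x - y) = adj x - adj y.
Proof. by rewrite hadjD hadjN. Qed.
Lemma hadj1 : adj (1 : M) = 1.
Proof. by rewrite /adj conjm1 trmx1. Qed.
Lemma hadj0 : adj (0 : M) = 0.
Proof. by rewrite /adj /conjm map_mx0 trmx0. Qed.
Lemma hadjK (x : M) : adj (adj x) = x.
Proof. by apply/matrixP => i j; rewrite /adj /conjm !mxE conjCK. Qed.
Lemma hadj_conjm (x : M) : adj (conjm x) = conjm (adj x).
Proof. by apply/matrixP => i j; rewrite /adj /conjm !mxE. Qed.
Lemma hadj_sum I r (Pr : pred I) (F : I -> M) :
  adj (\sum_(i <- r | Pr i) F i) = \sum_(i <- r | Pr i) adj (F i).
Proof. exact: (big_morph _ hadjD hadj0). Qed.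
Lemma commE (x y : M) : comm x y = x * y - y * x.
Proof. by rewrite /comm !mulmxE. Qed.
Lemma sAl (c : C) (x y : M) : c *: (x * y) = (c *: x) * y.
Proof. by rewrite -!mulmxE scalemxAl. Qed.
Lemma sAr (c : C) (x y : M) : c *: (x * y) = x * (c *: y).
Proof. by rewrite -!mulmxE scalemxAr. Qed.
End S.

Unset Implicit Arguments.
Section J.
Variables (R : realType) (n : nat).
Local Notation C := (R[i]).
Local Notation M := ('M[C]_n).
Variables (U : M) (eps : C).
Hypothesis HU1 : U * adj U = 1.
Hypothesis HU2 : adj U * U = 1.
Hypothesis Heps : eps = 1 \/ eps = -1.
Hypothesis HUc : U * conjm U = eps%:M.

Lemma JconjE (x : M) : Jconj U x = U * conjm x * adj U.
Proof. by rewrite /Jconj !mulmxE. Qed.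
Lemma JconjM (x y : M) : Jconj U (x * y) = Jconj U x * Jconj U y.
Proof.
by rewrite !JconjE conjmM !mulrA -[U * conjm x * adj U * U]mulrA HU2 mulr1.
Qed.
Lemma Jconj1 : Jconj U 1 = 1.
Proof. by rewrite JconjE conjm1 mulr1. Qed.
Lemma JconjD (x y : M) : Jconj U (x + y) = Jconj U x + Jconj U y.
Proof. by rewrite !JconjE conjmD mulrDr mulrDl. Qed.
Lemma JconjN (x : M) : Jconj U (- x) = - Jconj U x.
Proof. by rewrite !JconjE conjmN mulrN mulNr. Qed.
Lemma JconjB (x y : M) : Jconj U (x - y) = Jconj U x - Jconj U y.
Proof. by rewrite JconjD JconjN. Qed.
Lemma Jconj0 : Jconj U 0 = 0.
Proof. by rewrite JconjE /conjm map_mx0 mulr0 mul0r. Qed.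
Lemma JconjZ (c : C) (x : M) : Jconj U (c *: x) = c^* *: Jconj U x.
Proof. by rewrite !JconjE conjmZ -sAr -sAl. Qed.
Lemma Jconj_sum I r (Pr : pred I) (F : I -> M) :
  Jconj U (\sum_(i <- r | Pr i) F i) = \sum_(i <- r | Pr i) Jconj U (F i).
Proof. exact: (big_morph _ JconjD Jconj0). Qed.
Lemma Jconj_adj (x : M) : adj (Jconj U x) = Jconj U (adj x).
Proof. by rewrite !JconjE !hadjM hadjK hadj_conjm mulrA. Qed.
Lemma eps_conj : eps^* = eps.
Proof. by case: Heps => ->; rewrite ?rmorphN rmorph1. Qed.
Lemma eps_sq : eps * eps = 1.
Proof. by case: Heps => ->; rewrite ?mulrNN mulr1. Qed.
Lemma JconjK (x : M) : Jconj U (Jconj U x) = x.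
Proof.
rewrite !JconjE !conjmM conjmK.
have h1 : conjm (adj U) * adj U = eps%:M.
  rewrite -hadj_conjm -hadjM HUc /adj /conjm map_scalar_mx tr_scalar_mx.
  by congr (_%:M); apply: eps_conj.
rewrite !mulrA -[U * conjm U * x * conjm (adj U) * adj U]mulrA h1 HUc.
by rewrite -!mulmxE mul_scalar_mx mul_mx_scalar scalerA eps_sq scale1r.
Qed.
End J.

Set Implicit Arguments. Unset Strict Implicit.
Section Gen.
Variables (R : realType) (n : nat).
Local Notation C := (R[i]).
Local Notation M := ('M[C]_n).

Lemma cs1 (S : M -> Prop) : cstar_subalg S -> S 1.
Proof. by case. Qed.
Lemma csD (S : M -> Prop) : cstar_subalg S -> forall x y, S x -> S y -> S (x + y).
Proof. by case. Qed.
Lemma csZ (S : M -> Prop) : cstar_subalg S -> forall c x, S x -> S (c *: x).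
Proof. by case. Qed.
Lemma csM (S : M -> Prop) : cstar_subalg S -> forall x y, S x -> S y -> S (x * y).
Proof. by case=> _ _ _ h _ x y hx hy; rewrite -mulmxE; apply: h. Qed.
Lemma csA (S : M -> Prop) : cstar_subalg S -> forall x, S x -> S (adj x).
Proof. by case. Qed.
Lemma csN (S : M -> Prop) : cstar_subalg S -> forall x, S x -> S (- x).
Proof. by move=> hS x hx; rewrite -scaleN1r; apply: csZ. Qed.
Lemma cs0 (S : M -> Prop) : cstar_subalg S -> S 0.
Proof. by move=> hS; rewrite -(scale0r (1 : M)); apply: csZ => //; apply: cs1. Qed.
Lemma csB (S : M -> Prop) : cstar_subalg S -> forall x y, S x -> S y -> S (x - y).
Proof. by move=> hS x y hx hy; apply: csD => //; apply: csN. Qed.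
Lemma cs_sum (S : M -> Prop) : cstar_subalg S -> forall I r (Pr : pred I) (F : I -> M),
  (forall i, Pr i -> S (F i)) -> S (\sum_(i <- r | Pr i) F i).
Proof.
move=> hS I r Pr F hF; elim/big_ind: _ => //; first exact: cs0.
by move=> x y; apply: csD.
Qed.

Lemma gen_is (G : M -> Prop) : cstar_subalg (gen_cstar G).
Proof.
split.
- by move=> S hS _; apply: cs1.
- by move=> x y hx hy S hS hG; apply: csD => //; [apply: hx | apply: hy].
- by move=> c x hx S hS hG; apply: csZ => //; apply: hx.
- by move=> x y hx hy S hS hG; rewrite mulmxE; apply: csM => //; [apply: hx | apply: hy].
- by move=> x hx S hS hG; apply: csA => //; apply: hx.
Qed.
Lemma gen_base (G : M -> Prop) g : G g -> gen_cstar G g.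
Proof. by move=> hg S _ hG; apply: hG. Qed.
Lemma gen_ind (G S : M -> Prop) : cstar_subalg S -> (forall g, G g -> S g) ->
  forall x, gen_cstar G x -> S x.
Proof. by move=> hS hG x hx; apply: hx. Qed.

Lemma cstar_commutant (T : M -> Prop) : (forall t, T t -> T (adj t)) ->
  cstar_subalg (fun x => forall t, T t -> GRing.comm x t).
Proof.
move=> hT; split.
- by move=> t _; rewrite /GRing.comm -[1%:M]/(1 : M) mul1r mulr1.
- by move=> x y hx hy t ht; apply/commr_sym; apply: commrD; apply/commr_sym; [apply: hx | apply: hy].
- by move=> c x hx t ht; rewrite /GRing.comm -sAl -sAr hx.
- by move=> x y hx hy t ht; rewrite mulmxE; apply/commr_sym; apply: commrM; apply/commr_sym; [apply: hx | apply: hy].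
- move=> x hx t ht; have := hx _ (hT _ ht); rewrite /GRing.comm => h.
  by rewrite -[t]hadjK -!hadjM h.
Qed.
End Gen.

Set Implicit Arguments. Unset Strict Implicit.
Section Pin.
Variables (T : pzRingType) (N : nat) (E : 'I_N -> T).
Hypothesis Eidem : forall k, E k * E k = E k.
Hypothesis Eorth : forall i k, i != k -> E i * E k = 0.
Hypothesis Esum : \sum_i E i = 1.

Definition pin (X : T) := \sum_i E i * X * E i.

Lemma pinB X Y : pin (X - Y) = pin X - pin Y.
Proof. by rewrite /pin -sumrB; apply: eq_bigr => i _; rewrite mulrBr mulrBl. Qed.
Lemma pinD X Y : pin (X + Y) = pin X + pin Y.
Proof. by rewrite /pin -big_split; apply: eq_bigr => i _; rewrite mulrDr mulrDl. Qed.

Lemma pin0 : pin 0 = 0.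
Proof. by rewrite /pin big1 // => i _; rewrite mulr0 mul0r. Qed.
Lemma pin_sum I r (Pr : pred I) (F : I -> T) :
  pin (\sum_(i <- r | Pr i) F i) = \sum_(i <- r | Pr i) pin (F i).
Proof. exact: (big_morph _ pinD pin0). Qed.

Lemma pin_commE k X : GRing.comm (pin X) (E k).
Proof.
rewrite /GRing.comm /pin mulr_suml mulr_sumr [LHS](bigD1 k) //= [RHS](bigD1 k) //=.
rewrite !big1 ?addr0.
- by rewrite !mulrA Eidem -!mulrA Eidem.
- by move=> i hi; rewrite !mulrA Eorth ?mul0r // eq_sym.
- by move=> i hi; rewrite -!mulrA Eorth ?mulr0.
Qed.

Lemma pinM_l Y X : (forall k, GRing.comm Y (E k)) -> pin (Y * X) = Y * pin X.
Proof.
move=> h; rewrite /pin mulr_sumr; apply: eq_bigr => i _.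
by rewrite !mulrA h.
Qed.
Lemma pinM_r Y X : (forall k, GRing.comm Y (E k)) -> pin (X * Y) = pin X * Y.
Proof.
move=> h; rewrite /pin mulr_suml; apply: eq_bigr => i _.
by rewrite -!mulrA h.
Qed.
Lemma pin_fix Y : (forall k, GRing.comm Y (E k)) -> pin Y = Y.
Proof.
move=> h; rewrite /pin (eq_bigr (fun i => Y * E i)).
  by rewrite -mulr_sumr Esum mulr1.
by move=> i _; rewrite -h -mulrA Eidem.
Qed.
Lemma pin_idem X : pin (pin X) = pin X.
Proof. by apply: pin_fix => k; apply: pin_commE. Qed.
Lemma sub_pin X : X - pin X = \sum_k (X * E k - E k * X) * E k.
Proof.
rewrite (eq_bigr (fun k => X * E k - E k * X * E k)).
  by rewrite sumrB -mulr_sumr Esum mulr1.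
by move=> k _; rewrite mulrBl -mulrA Eidem.
Qed.
Lemma pin_pres Y X : (forall k, GRing.comm (E k) Y) -> GRing.comm X Y -> GRing.comm (pin X) Y.
Proof.
move=> h hX; rewrite /pin; apply/commr_sym; apply: commr_sum => i _.
by apply: commrM; [apply: commrM|]; apply/commr_sym.
Qed.
End Pin.

Set Implicit Arguments. Unset Strict Implicit.
Section Main.
Variables (R : realType) (n : nat).
Local Notation C := (R[i]).
Local Notation M := ('M[C]_n).
Variables (A : M -> Prop) (D U : M) (eps eps' : C).
Hypothesis HA : real_star_subalg A.
Hypothesis HD : adj D = D.
Hypothesis HU1 : U * adj U = 1.
Hypothesis HU2 : adj U * U = 1.
Hypothesis Heps : eps = 1 \/ eps = -1.
Hypothesis Heps' : eps' = 1 \/ eps' = -1.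
Hypothesis HUc : U * conjm U = eps%:M.
Hypothesis HUD : U * conjm D = eps' *: (D * U).
Hypothesis F1 : forall a b, A a -> A b -> GRing.comm a (Jconj U b).
Hypothesis F2 : forall a b, A a -> A b -> GRing.comm (D*a - a*D) (Jconj U b).

Local Notation J := (Jconj U).
Local Notation cD x := (D * x - x * D).
Local Notation ACA := (Defs.AC A).

Lemma A1 : A 1. Proof. by case: HA. Qed.
Lemma Aadj a : A a -> A (adj a). Proof. by case: HA => _ _ _ _; apply. Qed.
Lemma A_AC a : A a -> ACA a. Proof. exact: gen_base. Qed.
Lemma AC_is : cstar_subalg ACA. Proof. exact: gen_is. Qed.
Lemma ACadj x : ACA x -> ACA (adj x). Proof. exact: (csA AC_is). Qed.

Lemma JD : J D = eps' *: D.
Proof. by rewrite JconjE HUD -sAl -mulrA HU1 mulr1. Qed.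
Lemma J_cD x : J (cD x) = eps' *: cD (J x).
Proof. by rewrite JconjB !JconjM // JD -sAl -sAr scalerBr. Qed.
Lemma adj_cD x : adj (cD x) = - cD (adj x).
Proof. by rewrite hadjB !hadjM HD opprB. Qed.
Lemma cD1 : cD 1 = 0. Proof. by rewrite mulr1 mul1r subrr. Qed.
Lemma cDD x y : cD (x + y) = cD x + cD y.
Proof. by rewrite mulrDr mulrDl opprD addrACA. Qed.
Lemma cDZ c x : cD (c *: x) = c *: cD x.
Proof. by rewrite scalerBr -sAl -sAr. Qed.
Lemma cDM x y : cD (x * y) = cD x * y + x * cD y.
Proof.
rewrite mulrBl mulrBr !mulrA addrA; congr (_ - _).
by rewrite subrK.
Qed.
Lemma eps'_sq : eps' * eps' = 1.
Proof. by case: Heps' => ->; rewrite ?mulrNN mulr1. Qed.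

Lemma commZ (x y : M) c : GRing.comm x y -> GRing.comm x (c *: y).
Proof. by rewrite /GRing.comm -sAl -sAr => ->. Qed.
Lemma commNr (x y : M) : GRing.comm x y -> GRing.comm x (- y).
Proof. by move=> h; apply: commrN. Qed.
Lemma comm_adj (x y : M) : GRing.comm x y -> GRing.comm (adj x) (adj y).
Proof. by rewrite /GRing.comm -!hadjM => ->. Qed.

Lemma CJ_cstar z : cstar_subalg (fun y => GRing.comm z (J y) /\ GRing.comm (adj z) (J y)).
Proof.
split.
- by rewrite -[1%:M]/(1 : M) Jconj1 //; split; apply: commr1.
- by move=> x y [h1 h2] [h3 h4]; rewrite JconjD; split; apply: commrD.
- by move=> c x [h1 h2]; rewrite JconjZ; split; apply: commZ.
- by move=> x y [h1 h2] [h3 h4]; rewrite mulmxE JconjM //; split; apply: commrM.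
- move=> x [h1 h2]; rewrite -Jconj_adj //; split.
  + by rewrite -[z]hadjK; apply: comm_adj.
  + by apply: comm_adj.
Qed.

Lemma F1ext x y : ACA x -> ACA y -> GRing.comm x (J y).
Proof.
move=> hx hy.
have S1 : forall x, ACA x -> forall t, (exists b, A b /\ t = J b) -> GRing.comm x t.
  apply: gen_ind.
    apply: cstar_commutant => t [b [hb ->]]; exists (adj b); split; first exact: Aadj.
    by rewrite Jconj_adj.
  by move=> g hg t [b [hb ->]]; apply: F1.
have : (fun y => GRing.comm x (J y) /\ GRing.comm (adj x) (J y)) y.
  apply: (gen_ind (CJ_cstar x)) hy => g hg /=; split; apply: S1 => //.
  - by exists g.
  - exact: ACadj.
  - by exists g.
by case.
Qed.

Lemma commlD (x y t : M) : GRing.comm x t -> GRing.comm y t -> GRing.comm (x + y) t.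
Proof. by move=> h1 h2; apply/commr_sym; apply: commrD; apply/commr_sym. Qed.
Lemma commlM (x y t : M) : GRing.comm x t -> GRing.comm y t -> GRing.comm (x * y) t.
Proof. by move=> h1 h2; apply/commr_sym; apply: commrM; apply/commr_sym. Qed.
Lemma commlN (x t : M) : GRing.comm x t -> GRing.comm (- x) t.
Proof. by move=> h1; apply/commr_sym; apply: commrN; apply/commr_sym. Qed.
Lemma commlZ (x t : M) c : GRing.comm x t -> GRing.comm (c *: x) t.
Proof. by move=> h1; apply/commr_sym; apply: commZ; apply/commr_sym. Qed.
Lemma comml0 (t : M) : GRing.comm 0 t.
Proof. by rewrite /GRing.comm mulr0 mul0r. Qed.
Lemma comml1 (t : M) : GRing.comm 1 t.
Proof. by rewrite /GRing.comm mulr1 mul1r. Qed.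

Lemma F2ext x y : ACA x -> ACA y -> GRing.comm (cD x) (J y).
Proof.
move=> hx hy.
pose T t := exists b, A b /\ t = J b.
have S1 : forall x, ACA x -> forall t, T t -> GRing.comm x t /\ GRing.comm (cD x) t.
  apply: gen_ind; last by move=> g hg t [b [hb ->]]; split; [apply: F1 | apply: F2].
  split.
  - by move=> t _; rewrite -[1%:M]/(1 : M) cD1; split; [apply: comml1 | apply: comml0].
  - move=> x1 y1 h1 h2 t ht; have [h3 h4] := h1 _ ht; have [h5 h6] := h2 _ ht.
    by rewrite cDD; split; apply: commlD.
  - move=> c x1 h1 t ht; have [h3 h4] := h1 _ ht.
    by rewrite cDZ; split; apply: commlZ.
  - move=> x1 y1 h1 h2 t ht; have [h3 h4] := h1 _ ht; have [h5 h6] := h2 _ ht.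
    by rewrite mulmxE cDM; split; [apply: commlM | apply: commlD; apply: commlM].
  - move=> x1 h1 t [b [hb ->]].
    have [h3 h4] := h1 (J (adj b)) (ex_intro _ (adj b) (conj (Aadj hb) erefl)).
    have e : cD (adj x1) = - adj (cD x1) by rewrite adj_cD opprK.
    rewrite -[J b]hadjK Jconj_adj // e; split; first by apply: comm_adj.
    by apply: commlN; apply: comm_adj.
have : (fun y => GRing.comm (cD x) (J y) /\ GRing.comm (adj (cD x)) (J y)) y.
  apply: (gen_ind (CJ_cstar (cD x))) hy => g hg /=; rewrite adj_cD; split.
  - by have [] := S1 x hx (J g) (ex_intro _ g (conj hg erefl)).
  - apply: commlN.
    by have [] := S1 _ (ACadj hx) (J g) (ex_intro _ g (conj hg erefl)).
by case.
Qed.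

Lemma K3ext x y : ACA x -> ACA y -> GRing.comm (cD (J y)) x.
Proof.
move=> hx hy; apply: jacA; first exact: F1ext.
exact: F2ext.
Qed.

Lemma cp_rank (T T' : M) : central_proj A T -> central_proj A T' -> T' * T = T' -> T' != T ->
  (\rank T' < \rank T)%N.
Proof.
case=> _ hTi hTa _ _ [_ hT'i hT'a _ _] hT'T hne.
have sub : (T' <= T)%MS by apply/submxP; exists T'; rewrite mulmxE hT'T.
move: (mxrank_leqif_sup sub) => /leqifP; case: ifP => // /submxP [X hX].
have e1 : T * T' = T by rewrite hX -!mulmxE -mulmxA hT'i.
have e2 : T * T' = T' by rewrite -hTa -hT'a -hadjM hT'T.
by rewrite -e1 e2 eqxx in hne.
Qed.

Lemma ex_min m : forall T, central_proj A T -> (\rank T <= m)%N ->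
  exists Q, min_central_proj A Q /\ Q * T = Q.
Proof.
elim: m => [|m IH] T hT hr.
  move: hr; rewrite leqn0 mxrank_eq0 => /eqP hT0.
  by case: hT => _ _ _; rewrite hT0 eqxx.
case: (classic (forall Q, central_proj A Q -> Q *m T = Q -> Q = T)) => hmin.
  exists T; split; first by split.
  by case: hT => _ hTi _ _ _; rewrite -mulmxE.
have [Q hQ] : exists Q, ~ (central_proj A Q -> Q *m T = Q -> Q = T).
  by apply: not_all_ex_not.
have hQc : central_proj A Q by apply: NNPP => h; apply: hQ => /h.
have hQT : Q *m T = Q by apply: NNPP => h; apply: hQ => _ /h.
have hQne : Q != T by apply/eqP => h; apply: hQ.
have hQT' : Q * T = Q by rewrite -mulmxE.
have hlt := cp_rank hT hQc hQT' hQne.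
have hr' : (\rank Q <= m)%N by rewrite -ltnS (leq_trans hlt hr).
have [Q' [hQ'm hQ'Q]] := IH Q hQc hr'.
by exists Q'; split => //; rewrite -hQ'Q -mulrA hQT'.
Qed.

Variables (N : nat) (P : 'I_N -> M).
Hypothesis HPinj : injective P.
Hypothesis HPmin : forall k, min_central_proj A (P k).
Hypothesis HPall : forall Q, min_central_proj A Q -> exists k, Q = P k.

Lemma PAC k : ACA (P k). Proof. by case: (HPmin k) => [[]]. Qed.
Lemma Pidem k : P k * P k = P k. Proof. by case: (HPmin k) => [[]] _ h; rewrite -mulmxE. Qed.
Lemma Padj k : adj (P k) = P k. Proof. by case: (HPmin k) => [[]]. Qed.
Lemma Pcent k x : ACA x -> P k * x = x * P k.
Proof. by case: (HPmin k) => [[]] _ _ _ _ h _ hx; rewrite -!mulmxE h. Qed.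

Lemma Porth i k : i != k -> P i * P k = 0.
Proof.
move=> hik; case: (eqVneq (P i * P k) 0) => // hne.
have hc : central_proj A (P i * P k).
  split.
  - by apply: (csM AC_is); apply: PAC.
  - by rewrite mulmxE -mulrA [P k * _]mulrA (Pcent k (PAC i)) -!mulrA Pidem mulrA Pidem.
  - by rewrite hadjM !Padj (Pcent k (PAC i)).
  - exact: hne.
  - move=> x hx; rewrite !mulmxE -mulrA (Pcent k hx) mulrA (Pcent i hx) mulrA //.
have e1 : P i * P k = P i.
  case: (HPmin i) => _; apply => //.
  by rewrite mulmxE -mulrA (Pcent k (PAC i)) mulrA Pidem.
have e2 : P i * P k = P k.
  case: (HPmin k) => _; apply => //.
  by rewrite mulmxE -mulrA Pidem.
by move: hik; rewrite (HPinj (etrans (esym e1) e2)) eqxx.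
Qed.

Lemma PS k : P k * (\sum_i P i) = P k.
Proof.
rewrite mulr_sumr (bigD1 k) //= Pidem big1 ?addr0 // => i hi.
by apply: Porth; rewrite eq_sym.
Qed.
Lemma SP k : (\sum_i P i) * P k = P k.
Proof.
rewrite mulr_suml (bigD1 k) //= Pidem big1 ?addr0 // => i hi.
exact: Porth.
Qed.

Lemma Psum : \sum_i P i = 1.
Proof.
set S := \sum_i P i.
have hSS : S * S = S by rewrite {1}/S mulr_suml; apply: eq_bigr => i _; rewrite PS.
have hSAC : ACA S by apply: (cs_sum AC_is) => i _; apply: PAC.
case: (eqVneq (1 - S) 0) => [/eqP|hne]; first by rewrite subr_eq0 => /eqP.
have hc : central_proj A (1 - S).
  split.
  - by apply: (csB AC_is) => //; apply: (cs1 AC_is).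
  - by rewrite mulmxE !(mulrBl, mulrBr) !(mul1r, mulr1) hSS subrr subr0.
  - by rewrite hadjB hadj1 /S hadj_sum; congr (_ - _); apply: eq_bigr => i _; rewrite Padj.
  - exact: hne.
  - move=> x hx; rewrite !mulmxE mulrBl mulrBr mul1r mulr1; congr (_ - _).
    by rewrite /S mulr_suml mulr_sumr; apply: eq_bigr => i _; rewrite Pcent.
have [Q [hQm hQT]] := ex_min hc (leqnn _).
have [k hk] := HPall hQm.
move: hQT; rewrite hk mulrBr mulr1 PS subrr => h0.
by case: (HPmin k) => [[]] _ _ _; rewrite -h0 eqxx.
Qed.

Local Notation Q k := (J (P k)).
Lemma Qidem k : Q k * Q k = Q k. Proof. by rewrite -JconjM // Pidem. Qed.
Lemma Qorth i k : i != k -> Q i * Q k = 0.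
Proof. by move=> h; rewrite -JconjM // Porth // Jconj0. Qed.
Lemma Qsum : \sum_i Q i = 1.
Proof. by rewrite -Jconj_sum Psum Jconj1. Qed.
Lemma Qadj k : adj (Q k) = Q k. Proof. by rewrite Jconj_adj Padj. Qed.
Lemma JQ k : J (Q k) = P k. Proof. exact: (@JconjK _ _ U eps Heps HUc). Qed.
Lemma PQ i j : GRing.comm (P i) (Q j). Proof. by apply: F1ext; apply: PAC. Qed.

Local Notation Psi := (pin P).
Local Notation Phi := (pin (fun k => Q k)).
Definition D0' := D - Psi D.
Definition D1' := D - Phi D.
Definition R' := Psi (Phi D).

Lemma commlsum I r (Pr : pred I) (F : I -> M) t :
  (forall i, Pr i -> GRing.comm (F i) t) -> GRing.comm (\sum_(i <- r | Pr i) F i) t.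
Proof. by move=> h; apply/commr_sym; apply: commr_sum => i hi; apply/commr_sym; apply: h. Qed.

Lemma D1'_AC x : ACA x -> GRing.comm D1' x.
Proof.
move=> hx; rewrite /D1' sub_pin; [|exact: Qidem|exact: Qsum].
apply: commlsum => l _; apply: commlM; first by apply: K3ext => //; apply: PAC.
by apply/commr_sym; apply: F1ext => //; apply: PAC.
Qed.
Lemma D0'_J y : ACA y -> GRing.comm D0' (J y).
Proof.
move=> hy; rewrite /D0' sub_pin; [|exact: Pidem|exact: Psum].
apply: commlsum => l _; apply: commlM; first by apply: F2ext => //; apply: PAC.
by apply: F1ext => //; apply: PAC.
Qed.
Lemma PsiD1' : Psi D1' = D1'.
Proof. by apply: pin_fix; [exact: Pidem|exact: Psum|move=> k; apply: D1'_AC; apply: PAC]. Qed.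
Lemma PhiD0' : Phi D0' = D0'.
Proof. by apply: pin_fix; [exact: Qidem|exact: Qsum|move=> k; apply: D0'_J; apply: PAC]. Qed.
Lemma Dsplit : D = D0' + D1' + R'.
Proof.
rewrite -PsiD1' /D1' pinB /R' /D0'.
by rewrite addrA subrK subrK.
Qed.

Lemma sum_neq (F : 'I_N -> M) i : \sum_(k | k != i) F k = \sum_k F k - F i.
Proof. by rewrite [X in _ = X - _](bigD1 i) //= addrC addrK. Qed.

Lemma Dblk_eq i j k l : Dblk P U D i j k l = P i * Q j * D * P k * Q l.
Proof. by []. Qed.

Lemma DR_eq : DR P U D = R'.
Proof.
rewrite /DR /R' /pin; apply: eq_bigr => i _.
rewrite mulr_sumr mulr_suml; apply: eq_bigr => j _.
rewrite Dblk_eq; move: (Q j) (PQ i j) => q hq.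
by rewrite !mulrA -[P i * q * D * q * P i]mulrA -hq mulrA.
Qed.

Lemma D1_eq : D1 P U D = D1'.
Proof.
rewrite /D1 -PsiD1' /D1' pinB -/R' -DR_eq /DR /pin -sumrB; apply: eq_bigr => i _.
rewrite (eq_bigr (fun j => P i * Q j * D * P i - Dblk P U D i j i j)).
  rewrite sumrB; congr (_ - _).
  by rewrite -!mulr_suml -mulr_sumr Qsum mulr1.
move=> j _; rewrite sum_neq; congr (_ - _).
under eq_bigr do rewrite Dblk_eq.
by rewrite -mulr_sumr Qsum mulr1.
Qed.

Lemma D0_eq : D0 P U D = D0'.
Proof.
have -> : D0' = Phi D - R'.
  have := PsiD1'; rewrite /D1' pinB -/R' /D0' => h.
  have h' : Psi D = D - Phi D + R' by rewrite -h subrK.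
  by rewrite h' z3.
rewrite /D0 -DR_eq /DR.
rewrite (eq_bigr (fun i => \sum_j (P i * Q j * D * Q j) - \sum_j Dblk P U D i j i j)).
  rewrite sumrB; congr (_ - _).
  rewrite (eq_bigr (fun i => P i * Phi D)); first by rewrite -mulr_suml Psum mul1r.
  by move=> i _; rewrite /pin mulr_sumr; apply: eq_bigr => j _; rewrite !mulrA.
move=> i _; rewrite -sumrB; apply: eq_bigr => j _.
rewrite sum_neq; congr (_ - _).
under eq_bigr do rewrite Dblk_eq.
by rewrite -mulr_suml -mulr_sumr Psum mulr1.
Qed.

Lemma R'_P k : GRing.comm R' (P k).
Proof. by apply: pin_commE; [exact: Pidem | exact: Porth]. Qed.
Lemma R'_Q k : GRing.comm R' (Q k).
Proof.
apply: pin_pres => [i|]; first exact: PQ.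
by apply: pin_commE; [exact: Qidem | exact: Qorth].
Qed.

Lemma pinZ (E : 'I_N -> M) c X : pin E (c *: X) = c *: pin E X.
Proof. by rewrite /pin scaler_sumr; apply: eq_bigr => i _; rewrite -sAr -sAl. Qed.
Lemma J_pinP X : J (Psi X) = Phi (J X).
Proof. by rewrite /pin Jconj_sum; apply: eq_bigr => i _; rewrite !JconjM. Qed.
Lemma J_pinQ X : J (Phi X) = Psi (J X).
Proof. by rewrite /pin Jconj_sum; apply: eq_bigr => i _; rewrite JconjM // JconjM // JQ. Qed.
Lemma JD0' : J D0' = eps' *: D1'.
Proof. by rewrite /D0' /D1' JconjB J_pinP JD pinZ scalerBr. Qed.
Lemma JD1' : J D1' = eps' *: D0'.
Proof. by rewrite /D0' /D1' JconjB J_pinQ JD pinZ scalerBr. Qed.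
Lemma JR' : J R' = eps' *: R'.
Proof.
have e : R' = D - D0' - D1' by rewrite {1}Dsplit z4.
rewrite e (@JconjB _ _ U (D - D0') D1') (@JconjB _ _ U D D0') JD JD0' JD1'.
by rewrite [eps' *: (D - D0' - D1')]scalerBr [eps' *: (D - D0')]scalerBr [eps' *: D - eps' *: D1' - eps' *: D0']addrAC.
Qed.

Lemma comm_J (x y : M) : GRing.comm x y -> GRing.comm (J x) (J y).
Proof. by rewrite /GRing.comm -!JconjM // => ->. Qed.
Lemma comm_unscale (x y : M) c : c * c = 1 -> GRing.comm (c *: x) y -> GRing.comm x y.
Proof. by move=> hc h; rewrite -[x]scale1r -hc -scalerA; apply: commlZ. Qed.

Hypothesis HDR : forall a, A a -> DR P U D *m a = a *m DR P U D.
Lemma R'_A a : A a -> GRing.comm R' a.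
Proof. by move=> ha; rewrite /GRing.comm -DR_eq -!mulmxE HDR. Qed.
Lemma R'_J b : A b -> GRing.comm R' (J b).
Proof.
move=> hb; apply: (comm_unscale eps'_sq); rewrite -JR'.
by apply: comm_J; apply: R'_A.
Qed.

Lemma cD_A a : A a -> cD a = D0' * a - a * D0'.
Proof.
move=> ha; rewrite Dsplit; apply: cr3; last exact: R'_A.
by apply: D1'_AC; apply: A_AC.
Qed.
Lemma cD_J b : A b -> cD (J b) = D1' * J b - J b * D1'.
Proof.
move=> hb; rewrite Dsplit [D0' + D1']addrC; apply: cr3; last exact: R'_J.
by apply: D0'_J; apply: A_AC.
Qed.
Lemma cD_P k : cD (P k) = D0' * P k - P k * D0'.
Proof. by rewrite Dsplit; apply: cr3; [apply: D1'_AC; apply: PAC | apply: R'_P]. Qed.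
Lemma cD_Q k : cD (Q k) = D1' * Q k - Q k * D1'.
Proof.
by rewrite Dsplit [D0' + D1']addrC; apply: cr3; [apply: D0'_J; apply: PAC | apply: R'_Q].
Qed.

Lemma K4 a b : A a -> A b -> D0' * D1' - D1' * D0' = 0 -> GRing.comm (cD a) (cD (J b)).
Proof.
move=> ha hb hZ; apply/eqP; rewrite -subr_eq0 cD_A // cD_J //.
rewrite keyid /=.
- by rewrite hZ mul0r mulr0 subrr mul0r mulr0 subrr.
- by apply: D0'_J; apply: A_AC.
- by apply: D1'_AC; apply: A_AC.
- exact: F1.
Qed.

Lemma PhiD1' : Phi D1' = 0.
Proof. by rewrite /D1' pinB pin_idem ?subrr //; [exact: Qidem | exact: Qorth | exact: Qsum]. Qed.
Lemma PsiD0' : Psi D0' = 0.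
Proof. by rewrite /D0' pinB pin_idem ?subrr //; [exact: Pidem | exact: Porth | exact: Psum]. Qed.

Lemma conv : (forall k l, GRing.comm (cD (P k)) (cD (Q l))) -> D0' * D1' - D1' * D0' = 0.
Proof.
move=> hyp.
have hPhi : Phi (D0' * D1' - D1' * D0') = 0.
  have hc : forall k, GRing.comm D0' (Q k) by move=> k; apply: D0'_J; apply: PAC.
  by rewrite pinB (pinM_l _ hc) (pinM_r _ hc) PhiD1' mulr0 mul0r subrr.
have hPsi : Psi (D0' * D1' - D1' * D0') = 0.
  have hc : forall k, GRing.comm D1' (P k) by move=> k; apply: D1'_AC; apply: PAC.
  by rewrite pinB (pinM_l _ hc) (pinM_r _ hc) PsiD0' mulr0 mul0r subrr.
move: hPhi hPsi; set Z := D0' * D1' - D1' * D0' => hPhi hPsi.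
have h1 : forall k l, GRing.comm (Z * P k - P k * Z) (Q l).
  move=> k l; apply: subr0_eq; rewrite /Z -keyid2.
  - by rewrite -cD_P -cD_Q hyp subrr.
  - by apply: D0'_J; apply: PAC.
  - by apply: D1'_AC; apply: PAC.
  - exact: PQ.
have h2 : forall k l, GRing.comm (Z * Q l - Q l * Z) (P k).
  move=> k l; apply: jacA; first exact: PQ.
  exact: h1.
have eZ : Z = \sum_l (Z * Q l - Q l * Z) * Q l.
  by rewrite -sub_pin ?hPhi ?subr0 //; [exact: Qidem | exact: Qsum].
rewrite -hPsi [in RHS]eZ pin_sum {1}eZ; apply: eq_bigr => l _.
rewrite pinM_l; last by move=> k; apply: h2.
rewrite pin_fix //; [exact: Pidem | exact: Psum | move=> k; apply/commr_sym; exact: PQ].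
Qed.

Local Notation opp := (Defs.opp U).
Lemma oppE y : opp y = J (adj y). Proof. by []. Qed.
Lemma opp_adj y : adj (opp y) = opp (adj y).
Proof. by rewrite !oppE Jconj_adj. Qed.

Lemma gen2 (G : M -> Prop) :
  (forall g1 g2, G g1 -> G g2 -> GRing.comm g1 (opp g2) /\ GRing.comm g1 (opp (adj g2))) ->
  forall x y, gen_cstar G x -> gen_cstar G y -> GRing.comm x (opp y).
Proof.
move=> H.
pose T t := exists g2, G g2 /\ (t = opp g2 \/ t = opp (adj g2)).
have S1 : forall x, gen_cstar G x -> forall t, T t -> GRing.comm x t.
  apply: gen_ind.
    apply: cstar_commutant => t [g2 [hg [->|->]]]; exists g2; split => //.
      by right; rewrite opp_adj.
    by left; rewrite opp_adj hadjK.
  by move=> g hg t [g2 [hg2 [->|->]]]; have [] := H g g2 hg hg2.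
move=> x y hx hy.
have hS2 : cstar_subalg (fun y => GRing.comm x (opp y) /\ GRing.comm (adj x) (opp y)).
    split.
    - by rewrite oppE -[1%:M]/(1 : M) hadj1 Jconj1 //; split; apply: commr1.
    - move=> y1 y2 [h1 h2] [h3 h4]; rewrite oppE hadjD JconjD -!oppE.
      by split; apply: commrD.
    - move=> c y1 [h1 h2]; rewrite oppE hadjZ JconjZ conjCK -oppE.
      by split; apply: commZ.
    - move=> y1 y2 [h1 h2] [h3 h4]; rewrite mulmxE oppE hadjM JconjM // -!oppE.
      by split; apply: commrM.
    - move=> y1 [h1 h2]; rewrite -opp_adj; split.
      + by rewrite -[x]hadjK; apply: comm_adj.
      + by apply: comm_adj.
have : (fun y => GRing.comm x (opp y) /\ GRing.comm (adj x) (opp y)) y.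
  apply: (gen_ind hS2) hy => g hg /=; split; apply: S1.
  - exact: hx.
  - by exists g; split => //; left.
  - exact: (csA (gen_is G)).
  - by exists g; split => //; left.
by case.
Qed.

Local Notation ClDG := (fun x => A x \/ exists a b, [/\ A a, A b & x = a *m comm D b]).
Lemma cDE x : comm D x = cD x. Proof. by rewrite commE. Qed.

Lemma ClD_AC x : ACA x -> ClD A D x /\ ClD A D (cD x).
Proof.
have hC := gen_is ClDG.
move: x; apply: (@gen_ind _ _ A (fun x => ClD A D x /\ ClD A D (cD x))).
  split.
  - by split; [apply: (cs1 hC) | rewrite -[1%:M]/(1 : M) cD1; apply: (cs0 hC)].
  - by move=> x1 y1 [h1 h2] [h3 h4]; rewrite cDD; split; apply: (csD hC).
  - by move=> c x1 [h1 h2]; rewrite cDZ; split; apply: (csZ hC).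
  - move=> x1 y1 [h1 h2] [h3 h4]; rewrite mulmxE cDM; split; first exact: (csM hC).
    by apply: (csD hC); apply: (csM hC).
  - move=> x1 [h1 h2]; rewrite -[cD (adj x1)]opprK -adj_cD; split; first exact: (csA hC).
    by apply: (csN hC); apply: (csA hC).
move=> g hg; split; apply: gen_base; first by left.
by right; exists 1, g; split => //; [exact: A1 | rewrite mul1mx cDE].
Qed.

Lemma comm_unscale_r (x y : M) c : c * c = 1 -> GRing.comm x (c *: y) -> GRing.comm x y.
Proof. by move=> hc h; apply/commr_sym; apply: (comm_unscale hc); apply/commr_sym. Qed.

Lemma so_conv : second_order A D U -> forall k l, GRing.comm (cD (P k)) (cD (Q l)).
Proof.
move=> hso k l.
have [_ hk] := ClD_AC (PAC k).
have [_ hl] := ClD_AC (PAC l).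
have := hso _ _ hk hl; rewrite !mulmxE oppE adj_cD Padj JconjN J_cD => h.
apply: (comm_unscale_r eps'_sq); rewrite -[_ *: _]opprK; apply: commrN; exact: h.
Qed.

Definition good g := forall e, A e -> GRing.comm g (J e) /\ GRing.comm g (cD (J e)).

Lemma good_gen g1 g2 : good g1 -> ClDG g2 -> GRing.comm g1 (J g2) /\ GRing.comm g1 (J (adj g2)).
Proof.
move=> hg [hb|[b [e [hb he ->]]]].
  by split; apply: (proj1 (hg _ _)) => //; apply: Aadj.
rewrite mulmxE cDE; split.
  rewrite JconjM // J_cD; apply: commrM; first by apply: (proj1 (hg _ hb)).
  by apply: commZ; apply: (proj2 (hg _ he)).
rewrite hadjM adj_cD JconjM // JconjN J_cD; apply: commrM; last first.
  by apply: (proj1 (hg _ (Aadj hb))).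
by apply: commrN; apply: commZ; apply: (proj2 (hg _ (Aadj he))).
Qed.

Lemma so_fwd : D0' * D1' - D1' * D0' = 0 -> second_order A D U.
Proof.
move=> hZ.
have hgood : forall g, ClDG g -> good g.
  move=> g [ha|[a [b [ha hb ->]]]] e he.
    split; first exact: F1.
    by apply/commr_sym; apply: K3ext; apply: A_AC.
  rewrite mulmxE cDE; split; apply: commlM.
  - exact: F1.
  - exact: F2.
  - by apply/commr_sym; apply: K3ext; apply: A_AC.
  - exact: K4.
move=> x y hx hy; rewrite !mulmxE.
apply: (gen2 _ hx hy) => g1 g2 hg1 hg2.
rewrite !oppE hadjK; have [h1 h2] := good_gen (hgood _ hg1) hg2; by split.
Qed.

Lemma main_iff : second_order A D U <-> comm (D0 P U D) (D1 P U D) = 0.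
Proof.
rewrite commE D0_eq D1_eq; split; last exact: so_fwd.
by move=> h; apply: conv; apply: so_conv.
Qed.
End Main.

Unset Implicit Arguments. Set Strict Implicit.

Theorem proposition9 (R : realType) (n : nat) (A : 'M[R[i]]_n -> Prop)
    (D U : 'M[R[i]]_n) (eps eps' : R[i]) (gam : option ('M[R[i]]_n * R[i]))
    (N : nat) (P : 'I_N -> 'M[R[i]]_n) :
  real_spectral_triple A D U eps eps' gam ->
  injective P ->
  (forall k, min_central_proj A (P k)) ->
  (forall Q, min_central_proj A Q -> exists k, Q = P k) ->
  (forall a, A a -> DR P U D *m a = a *m DR P U D) ->
  (second_order A D U <-> comm (D0 P U D) (D1 P U D) = 0).
Proof.
move=> [HA [HD [[HU1 HU2] [[Heps Heps'] [HUc [HUD [F1 [F2 _]]]]]]]] hinj hmin hall hDR.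
have hU1 : U * adj U = 1 by rewrite -mulmxE.
have hU2 : adj U * U = 1 by rewrite -mulmxE.
have hUc : U * conjm U = eps%:M by rewrite -mulmxE.
have hUD : U * conjm D = eps' *: (D * U) by rewrite -!mulmxE.
have hF1 : forall a b, A a -> A b -> GRing.comm a (Jconj U b).
  move=> a b ha hb; apply: subr0_eq; rewrite -commE; exact: F1.
have hF2 : forall a b, A a -> A b -> GRing.comm (D * a - a * D) (Jconj U b).
  move=> a b ha hb; apply: subr0_eq; rewrite -!commE; exact: F2.
exact: (main_iff HA HD hU1 hU2 Heps Heps' hUc hUD hF1 hF2 hinj hmin hall hDR).
Qed.
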